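(* Let $K$ be a number field and let $E\subset\mathbb{P}^2$ be the elliptic curve given by the Weierstrass equation $y^2=x^3+ax+b$ with $a,b\in K$, $4a^3+27b^2\neq0$. Let $h(t)\in K[t]$ be a polynomial of degree at least $2$, put $H(t)=h(t)+ah(t)^3+bh(t)^4\in K[t]$, and let $C$ be the projective curve defined by $s^2=H(t)$. Assume that $C$ is smooth (for example when $H(t)$ is separable). Then there exists a non-constant morphism of algebraic curves $\phi:C\to E$.
   Context: For $H\in K[t]$ of degree $n=2g+1>4$ or $n=2g+2>4$, the projective curve defined by $s^2=H(t)$ is obtained by gluing the affine curves $s^2=H(t)$ and $s'^2=t'^{2g+2}H(1/t')$ along $t\neq0$, $t'\neq0$ via $t'=1/t$, $s'=t^{-g-1}s$. When $H$ is separable it is a smooth projective hyperelliptic curve of genus $g\geq2$, with a double cover $\gamma:C\to\mathbb{P}^1$, $(s,t)\mapsto t$. *)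

(* Defs.v *)
(* Algebraic points are taken in algC (an algebraic closure
   of Q); the number field K is a subfield of algC. *)
From mathcomp Require Import all_boot all_order all_algebra all_field.
Set Implicit Arguments. Unset Strict Implicit. Unset Printing Implicit Defensive.
Import Order.TTheory GRing.Theory Num.Theory.
Local Open Scope ring_scope.

Definition is_number_field (K : {pred algC}) : Prop :=
  [/\ 0 \in K, 1 \in K,
      {in K &, forall x y, x - y \in K},
      {in K &, forall x y, x * y \in K} &
      {in K, forall x, x^-1 \in K}] /\

      exists s : seq algC, all (mem K) s /\
        forall x, x \in K -> exists c : seq rat,
          size c = size s /\ x = \sum_(i < size s) ratr c`_i * s`_i.

(* points of P^2 given by homogeneous coordinates (X, Y, Z) *)
Definition pt3 := (algC * algC * algC)%type.
Definition nz3 (p : pt3) : bool := ~~ [&& p.1.1 == 0, p.1.2 == 0 & p.2 == 0].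
Definition prop3 (p q : pt3) : Prop :=
  exists2 c : algC, c != 0 & q = (c * p.1.1, c * p.1.2, c * p.2).
Definition onE (a b : algC) (p : pt3) : bool :=
  p.1.2 ^+ 2 * p.2 == p.1.1 ^+ 3 + a * p.1.1 * p.2 ^+ 2 + b * p.2 ^+ 3.

(* hyperelliptic curve s^2 = H(t), deg H = n = 2g+1 or 2g+2 *)
Definition hyp_g (H : {poly algC}) : nat := ((size H).-1.-1)./2.
(* t'^(2g+2) H(1/t') *)
Definition hyp_rev (H : {poly algC}) : {poly algC} :=
  \poly_(i < (hyp_g H).*2.+3) H`_((hyp_g H).*2.+2 - i).

(* points of the two affine charts: (false,(t,s)) in s^2 = H(t),
   (true,(t',s')) in s'^2 = t'^(2g+2) H(1/t') *)
Definition cpre := (bool * (algC * algC))%type.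
Definition onC (H : {poly algC}) (P : cpre) : bool :=
  if P.1 then P.2.2 ^+ 2 == (hyp_rev H).[P.2.1] else P.2.2 ^+ 2 == H.[P.2.1].

(* Jacobian criterion for the affine plane curve s^2 = P(t) *)
Definition smooth_chart (P : {poly algC}) : Prop :=
  forall t s : algC, s ^+ 2 = P.[t] -> (2 * s != 0) \/ (P^`().[t] != 0).
Definition hyp_smooth (H : {poly algC}) : Prop :=
  smooth_chart H /\ smooth_chart (hyp_rev H).

(* bivariate polynomials in (u, v) = chart coordinates; coefficients in K *)
Definition ev2 (F : {poly {poly algC}}) (u v : algC) : algC := (F.[v%:P]).[u].
Definition over2 (K : {pred algC}) (F : {poly {poly algC}}) : bool :=
  all (fun q : {poly algC} => all (mem K) q) F.
Definition ev3 (F0 F1 F2 : {poly {poly algC}}) (u v : algC) : pt3 :=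
  (ev2 F0 u v, ev2 F1 u v, ev2 F2 u v).

(* phi : C -> E is a morphism defined over K: it lands in E, is compatible
   with the gluing t' = 1/t, s' = t^(-g-1) s, and is locally (on an open
   subset of a chart) given by [F0 : F1 : F2] with F_i in K[u,v]. *)
Definition hyp_morphism_to_E (K : {pred algC}) (a b : algC) (H : {poly algC})
    (phi : cpre -> pt3) : Prop :=
  [/\ (forall P, onC H P -> nz3 (phi P) /\ onE a b (phi P)),
      (forall t s t' s' : algC, onC H (false, (t, s)) -> t != 0 ->
          t' = t^-1 -> s' = t ^- (hyp_g H).+1 * s ->
          prop3 (phi (false, (t, s))) (phi (true, (t', s')))) &
      (forall P, onC H P -> exists F0 F1 F2 : {poly {poly algC}},
          [/\ over2 K F0, over2 K F1, over2 K F2,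
              nz3 (ev3 F0 F1 F2 P.2.1 P.2.2) &
              forall Q, onC H Q -> Q.1 = P.1 -> nz3 (ev3 F0 F1 F2 Q.2.1 Q.2.2) ->
                prop3 (ev3 F0 F1 F2 Q.2.1 Q.2.2) (phi Q)])].

Definition hyp_nonconstant (H : {poly algC}) (phi : cpre -> pt3) : Prop :=
  exists P Q, [/\ onC H P, onC H Q & ~ prop3 (phi P) (phi Q)].

(* Main.v *)
From HB Require Import structures.
Require Import Defs.
From mathcomp Require Import all_boot all_order all_algebra all_field.
From mathcomp Require Import ring zify.
From Stdlib Require Import Classical.
Import GRing.Theory Num.Theory.
Local Open Scope ring_scope.

Lemma rev_horner (p : {poly algC}) (N : nat) (x : algC) :
  (size p <= N.+1)%N -> x != 0 ->
  (\poly_(i < N.+1) p`_(N - i)).[x] = x ^+ N * p.[x^-1].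
Proof.
move=> sp x0; rewrite horner_poly (horner_coef_wide _ sp) mulr_sumr.
rewrite (reindex_inj rev_ord_inj) /=; apply: eq_bigr => i _.
have hi : (i <= N)%N by rewrite -ltnS.
rewrite subKn // mulrCA; congr (_ * _).
have -> : x ^+ N = x ^+ (N - i) * x ^+ i by rewrite -exprD subnK.
by rewrite exprVn mulrK // unitfE expf_neq0.
Qed.

Lemma poly_eq_nz (p q : {poly algC}) :
  (forall x, x != 0 -> p.[x] = q.[x]) -> p = q.
Proof.
move=> E; apply/eqP; rewrite -subr_eq0; apply/negPn/negP => nz.
pose rs := [seq (i.+1)%:R : algC | i <- iota 0 (size (p - q))].
have := max_poly_roots nz (rs := rs).
rewrite size_map size_iota ltnn => H; suff: false by [].
apply: H.
  apply/allP => y /mapP [i _ ->]; rewrite /root hornerD hornerN E ?subrr //.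
  by rewrite pnatr_eq0.
rewrite map_inj_uniq ?iota_uniq // => i j /eqP; rewrite eqr_nat => /eqP; by case.
Qed.
Lemma arith (d n : nat) : (2 <= d)%N -> (n = 3 * d \/ n = 4 * d)%N ->
  [/\ (d <= ((n.+1).-1.-1)./2.+1)%N, (((n.+1).-1.-1)./2.+1 <= 2 * d)%N,
      (n.+1 <= (((n.+1).-1.-1)./2).*2.+3)%N
    & n = (4 * d)%N -> ((n.+1).-1.-1)./2.+1 = (2 * d)%N].
Proof.
move=> d2 hn; rewrite -divn2 -mul2n /=.
case: hn => ->; split => *; lia.
Qed.

Lemma ar1 d : (2 <= d)%N -> (d.+1 < (d * 3).+1)%N.
Proof. lia. Qed.
Lemma ar2 d : (2 <= d)%N -> (d.+1 < (d * 4).+1)%N && ((d * 3).+1 < (d * 4).+1)%N.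
Proof. move=> ?; apply/andP; split; lia. Qed.
Lemma ar3 d m : (d <= m)%N -> (m <= 2 * d)%N -> (2 * d - m + (m - d) = d)%N.
Proof. lia. Qed.
Lemma ar5 d : (2 * d * 2 = d * 4)%N.
Proof. lia. Qed.
Lemma ar6 e m d : (e + m = 2 * d)%N -> (e + e + m * 2 = d * 4)%N.
Proof. lia. Qed.
Lemma ar4 d : (d * 3 = d + d * 2)%N.
Proof. lia. Qed.
Lemma ev2C (p : {poly algC}) u v : ev2 p%:P u v = p.[u].
Proof. by rewrite /ev2 hornerC. Qed.
Lemma ev2X u v : ev2 'X u v = v.
Proof. by rewrite /ev2 hornerX hornerC. Qed.
Lemma ev2M F G u v : ev2 (F * G) u v = ev2 F u v * ev2 G u v.
Proof. by rewrite /ev2 !hornerM. Qed.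

Lemma nz3_1 (p : pt3) : p.1.1 != 0 -> nz3 p.
Proof. by rewrite /nz3 => /negbTE ->. Qed.
Lemma nz3_2 (p : pt3) : p.1.2 != 0 -> nz3 p.
Proof. by rewrite /nz3 => /negbTE ->; rewrite andbF. Qed.
Lemma nz3_3 (p : pt3) : p.2 != 0 -> nz3 p.
Proof. by rewrite /nz3 => /negbTE ->; rewrite !andbF. Qed.
Lemma prop3I (c : algC) (p q : pt3) : c != 0 ->
  q.1.1 = c * p.1.1 -> q.1.2 = c * p.1.2 -> q.2 = c * p.2 -> prop3 p q.
Proof. by case: q => [[x y] z] /= c0 -> -> ->; exists c. Qed.

Ltac polyK := repeat first [ apply: rpredD | apply: rpredM | apply: rpredX
  | rewrite polyOverC | apply: polyOverXn | apply: polyOverX | apply: rpred1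
  | assumption ].

Theorem lemma3p6 (K : {pred algC}) (a b : algC) (h : {poly algC}) :
  is_number_field K -> a \in K -> b \in K ->
  4 * a ^+ 3 + 27 * b ^+ 2 != 0 ->
  h \is a polyOver K -> (2 < size h)%N ->
  let H := h + a%:P * h ^+ 3 + b%:P * h ^+ 4 in
  hyp_smooth H ->
  exists phi : cpre -> pt3, hyp_morphism_to_E K a b H phi /\ hyp_nonconstant H phi.
Proof.
move=> [[K0 K1 KB KM KV] _] Ka Kb disc hK hsz H _.
have Kc : GRing.subring_closed K by split; [exact: K1 | exact: KB | exact: KM].
pose KS : subringClosed algC :=
  HB.pack_for (subringClosed algC) K (GRing.isSubringClosed.Build algC K Kc).
have hKS : h \is a polyOver KS by [].
have KaS : a \in KS by [].
have KbS : b \in KS by [].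
set d := (size h).-1.
have sh : size h = d.+1 by rewrite /d prednK // (ltn_trans _ hsz).
have d2 : (2 <= d)%N by move: hsz; rewrite sh.
have h0 : h != 0 by rewrite -size_poly_eq0 sh.
have lc0 : h`_d != 0 by move: h0; rewrite -lead_coef_eq0.
have shn n : size (h ^+ n) = (d * n).+1.
  by rewrite -(size_exp h n) prednK // lt0n size_poly_eq0 expf_neq0.
have sH : size H = (if b == 0 then (3 * d)%N else (4 * d)%N).+1.
  case: eqP => [b0|/eqP b0].
    have a0 : a != 0.
      apply: contra disc => /eqP ->; rewrite b0; apply/eqP; ring.
    rewrite /H b0 polyC0 mul0r addr0 addrC size_polyDl.
      by rewrite size_Cmul // shn mulnC.
    by rewrite size_Cmul // shn sh; exact: ar1.
  rewrite /H addrC size_polyDl; first by rewrite size_Cmul // shn mulnC.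
  apply: leq_ltn_trans (size_polyD _ _) _; rewrite gtn_max sh size_Cmul // shn.
  have /andP[A1 A2] := ar2 _ d2; rewrite A1 /=.
  by rewrite mul_polyC; apply: leq_ltn_trans (size_scale_leq _ _) _; rewrite shn.
pose g := hyp_g H; pose m := g.+1.
have [Fm1 Fm2 FsH Fb'] := arith d (if b == 0 then (3 * d)%N else (4 * d)%N) d2
  ltac:(by case: (b == 0); [left|right]).
rewrite -sH in Fm1 Fm2 FsH Fb'.
have {}Fm1 : (d <= m)%N := Fm1.
have {}Fm2 : (m <= 2 * d)%N := Fm2.
have {}FsH : (size H <= (g.*2.+2).+1)%N := FsH.
have Fb : b != 0 -> m = (2 * d)%N.
  by move=> /negbTE b0; apply: Fb'; rewrite b0.
clear Fb'.
pose e := (2 * d - m)%N.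
have em : (e + m = 2 * d)%N by rewrite /e subnK.
pose k : {poly algC} := \poly_(i < d.+1) h`_(d - i).
have kx x : x != 0 -> k.[x] = x ^+ d * h.[x^-1].
  by move=> x0; apply: rev_horner; rewrite ?sh.
have k0 : k.[0] = h`_d by rewrite horner_coef0 coef_poly subn0.
have kK : k \is a polyOver KS.
  by apply: polyOver_poly => i _; apply: (polyOverP hKS).
pose R := hyp_rev H.
have Rx x : x != 0 -> R.[x] = x ^+ (m * 2) * H.[x^-1].
  move=> x0; have -> : R.[x] = x ^+ (g.*2.+2) * H.[x^-1] by exact: rev_horner.
  congr (_ ^+ _ * _).
  by rewrite /m -mul2n mulnC.
have Hx y : H.[y] = h.[y] + a * h.[y] ^+ 3 + b * h.[y] ^+ 4.
  by rewrite /H !hornerE.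
pose V : {poly algC} := 'X^(d * 3) + a%:P * 'X^d * k ^+ 2 + b%:P * k ^+ 3.
pose W : {poly algC} := if b == 0 then 'X^(m - d) * ('X^(d * 2) + a%:P * k ^+ 2) else V.
have I1 : 'X^e * W = V.
  rewrite /W /V; case: eqP => [b0|/eqP b0].
    rewrite b0 polyC0 mul0r addr0 mulrA -exprD.
    have -> : (e + (m - d) = d)%N by rewrite /e ar3.
    by rewrite (_ : (d * 3 = d + d * 2)%N) ?exprD; [ring | rewrite ar4].
  have -> : e = 0%N by rewrite /e Fb // subnn.
  by rewrite expr0 mul1r.
have I2 : ('X^e) ^+ 2 * R = k * V.
  apply: poly_eq_nz => x x0.
  rewrite !hornerM horner_exp hornerX Rx // mulrA -!exprD (ar6 _ _ _ em).
  rewrite Hx /V !hornerD !hornerM !hornerC !hornerXn kx // !exprM; ring.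
have I3 : k * W = 'X^e * R.
  apply: (mulfI (expf_neq0 e (negbT (polyX_eq0 _)))).
  by rewrite mulrCA I1 -I2 expr2 mulrA.
have EW x : k.[x] * W.[x] = x ^+ e * R.[x].
  by have := congr1 (horner^~ x) I3; rewrite /= !hornerM hornerXn => E; exact: E.
have EV x : x ^+ e * W.[x] = (x ^+ d) ^+ 3 + a * x ^+ d * k.[x] ^+ 2 + b * k.[x] ^+ 3.
  have := congr1 (horner^~ x) I1; rewrite /= hornerM hornerXn => ->.
  by rewrite /V !hornerD !hornerM !hornerC !hornerXn !exprM; ring.
have ER x : (x ^+ e) ^+ 2 * R.[x] = k.[x] * ((x ^+ d) ^+ 3 + a * x ^+ d * k.[x] ^+ 2 + b * k.[x] ^+ 3).
  have := congr1 (horner^~ x) I2; rewrite /= hornerM horner_exp hornerXn => ->.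
  by rewrite /V hornerM !hornerD !hornerM !hornerC !hornerXn !exprM; ring.
have kz x : k.[x] = 0 -> x != 0.
  move=> kx0; apply/eqP => x0; move: kx0; rewrite x0 k0 => /eqP.
  by rewrite (negbTE lc0).
have onI x s : s ^+ 2 = R.[x] -> k.[x] = 0 -> s = 0.
  move=> hs kx0; have x0 := kz x kx0.
  have := EW x; rewrite kx0 mul0r => /esym/eqP.
  rewrite mulf_eq0 expf_eq0 (negbTE x0) andbF /= -hs expf_eq0 /=.
  by move/eqP.
have Wnz x : k.[x] = 0 -> W.[x] != 0.
  move=> kx0; have x0 := kz x kx0; apply/eqP => W0.
  have := EV x; rewrite W0 mulr0 kx0.
  have -> : (x ^+ d) ^+ 3 + a * x ^+ d * 0 ^+ 2 + b * 0 ^+ 3 = (x ^+ d) ^+ 3 by ring.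
  by move/esym/eqP; rewrite !expf_eq0 (negbTE x0) !andbF.
pose Gp : {poly algC} := 1 + a%:P * h ^+ 2 + b%:P * h ^+ 3.
have Gpt t : Gp.[t] = 1 + a * h.[t] ^+ 2 + b * h.[t] ^+ 3.
  by rewrite /Gp !hornerD !hornerCM !horner_exp hornerC.
have HG t : H.[t] = h.[t] * Gp.[t] by rewrite Hx Gpt; ring.
have onA t s : s ^+ 2 = H.[t] -> h.[t] = 0 -> s = 0.
  by move=> hs ht; move: hs; rewrite HG ht mul0r => /eqP; rewrite expf_eq0 /= => /eqP.
have Gp0 t : h.[t] = 0 -> Gp.[t] = 1.
  by move=> ht; rewrite Gpt ht; ring.
have VK : V \is a polyOver KS.
  by rewrite /V; polyK.
have WK : W \is a polyOver KS.
  by rewrite /W; case: ifP => _ //; polyK.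
have GpK : Gp \is a polyOver KS.
  by rewrite /Gp; polyK.
have ov F : F \is a polyOver (polyOver_pred KS) -> over2 K F by [].
pose phiA (t s : algC) : pt3 :=
  if h.[t] == 0 then (0, 1, 0) else (h.[t], s, h.[t] ^+ 2).
pose phiI (x s : algC) : pt3 :=
  if k.[x] == 0 then (0, 1, 0) else (x ^+ d * k.[x], x ^+ e * s, k.[x] ^+ 2).
have nz010 : nz3 (0, 1, 0) by apply: nz3_2; rewrite oner_eq0.
have onE010 : onE a b (0, 1, 0) by rewrite /onE /=; apply/eqP; ring.
exists (fun P => if P.1 then phiI P.2.1 P.2.2 else phiA P.2.1 P.2.2).
split; [split|].
- move=> [[] [x s]] /=; rewrite /onC /= => /eqP hs.
    rewrite /phiI; case: ifP => [/eqP kx0 | /negbT kx0]; first by split.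
    split; first by apply: nz3_3; rewrite /= expf_neq0.
    rewrite /onE /=; apply/eqP.
    have -> : (x ^+ e * s) ^+ 2 * k.[x] ^+ 2 = ((x ^+ e) ^+ 2 * s ^+ 2) * k.[x] ^+ 2 by ring.
    by rewrite hs ER; ring.
  rewrite /phiA; case: ifP => [/eqP hx0 | /negbT hx0]; first by split.
  split; first by apply: nz3_1.
  by rewrite /onE /=; apply/eqP; rewrite hs Hx; ring.
- move=> t s t' s' /=; rewrite /onC /= => /eqP hs t0 -> ->.
  have x0 : t^-1 != 0 by rewrite invr_eq0.
  have kt : k.[t^-1] = t^-1 ^+ d * h.[t] by rewrite kx // invrK.
  rewrite /phiA /phiI kt; case: ifP => [/eqP ht | /negbT ht].
    rewrite ht mulr0 eqxx; apply: (prop3I (1)); rewrite /= ?mul1r ?oner_eq0 //.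
  rewrite (negbTE (mulf_neq0 (expf_neq0 _ x0) ht)).
  apply: (prop3I (t^-1 ^+ d * t^-1 ^+ d)) => /=.
  - by rewrite mulf_neq0 ?expf_neq0.
  - by rewrite mulrA.
  - rewrite -exprVn mulrA -!exprD.
    have -> : (e + (hyp_g H).+1 = d + d)%N by rewrite addnn -mul2n.
    by [].
  - by rewrite exprMn expr2.
- move=> [[] [x s]] /=; rewrite /onC /= => /eqP hs.
    case: (boolP (k.[x] == 0)) => [/eqP kx0 | kx0].
      exists (('X^d)%:P * 'X), W%:P, ('X * k%:P); split.
      + by apply: ov; polyK.
      + by apply: ov; polyK.
      + by apply: ov; polyK.
      + by rewrite /ev3 !(ev2C, ev2X, ev2M) /=; apply: nz3_2; exact: Wnz.
      move=> [[] [u v]] /=; rewrite /onC /=; last by move=> _ [].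
      move=> /eqP hv _; rewrite /ev3 !(ev2C, ev2X, ev2M) hornerXn => nzQ.
      rewrite /phiI; case: ifP => [/eqP ku0 | /negbT ku0].
        have v0 := onI u v hv ku0.
        have Wu := Wnz u ku0.
        apply: (prop3I (W.[u])^-1); rewrite /= ?invr_eq0 //.
        * by rewrite v0 !mulr0.
        * by rewrite mulVf.
        * by rewrite v0 !mul0r mulr0.
      have v0 : v != 0.
        apply/eqP => v0; move: nzQ; rewrite v0.
        have := EW u; rewrite -hv v0 expr2 !mulr0 => /eqP.
        rewrite mulf_eq0 (negbTE ku0) /= => /eqP ->.
        by rewrite /nz3 /= ?mulr0 ?mul0r eqxx.
      apply: (prop3I (k.[u] / v)); rewrite /= ?mulf_neq0 ?invr_eq0 //.
      * by rewrite mulrCA divfK.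
      * by rewrite mulrAC EW -hv expr2 mulrA mulfK.
      * by rewrite mulrA divfK // expr2.
    exists (('X^d * k)%:P), (('X^e)%:P * 'X), ((k ^+ 2)%:P); split.
    + by apply: ov; polyK.
    + by apply: ov; polyK.
    + by apply: ov; polyK.
    + rewrite /ev3 !(ev2C, ev2X, ev2M) /=; apply: nz3_3.
      by rewrite /= horner_exp expf_neq0.
    move=> [[] [u v]] /=; rewrite /onC /=; last by move=> _ [].
    move=> /eqP hv _; rewrite /ev3 !(ev2C, ev2X, ev2M) hornerM !hornerXn horner_exp => nzQ.
    rewrite /phiI; case: ifP => [/eqP ku0 | /negbT ku0].
      have v0 := onI u v hv ku0.
      by move: nzQ; rewrite /nz3 /= ku0 v0 !mulr0 expr2 mulr0 eqxx.
    by apply: (prop3I 1); rewrite /= ?mul1r ?oner_eq0.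
  case: (boolP (h.[x] == 0)) => [/eqP hx0 | hx0].
    exists 'X, Gp%:P, ('X * h%:P); split.
    + by apply: ov; polyK.
    + by apply: ov; polyK.
    + by apply: ov; polyK.
    + by rewrite /ev3 !(ev2C, ev2X, ev2M) /=; apply: nz3_2; rewrite Gp0 // oner_eq0.
    move=> [[] [u v]] /=; rewrite /onC /=; first by move=> _ [].
    move=> /eqP hv _; rewrite /ev3 !(ev2C, ev2X, ev2M) => nzQ.
    rewrite /phiA; case: ifP => [/eqP hu0 | /negbT hu0].
      have v0 := onA u v hv hu0.
      apply: (prop3I 1); rewrite /= ?oner_eq0 //.
      * by rewrite v0 mulr0.
      * by rewrite Gp0 // mulr1.
      * by rewrite v0 !mul0r mulr0.
    have v0 : v != 0.
      apply/eqP => v0; move: nzQ; rewrite v0.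
      have := HG u; rewrite -hv v0 expr2 mulr0 => /esym/eqP.
      rewrite mulf_eq0 (negbTE hu0) /= => /eqP ->.
      by rewrite /nz3 /= !mul0r eqxx.
    apply: (prop3I (h.[u] / v)); rewrite /= ?mulf_neq0 ?invr_eq0 //.
    * by rewrite divfK.
    * by rewrite mulrAC -HG -hv expr2 mulfK.
    * by rewrite mulrA divfK // expr2.
  exists h%:P, 'X, ((h ^+ 2)%:P); split.
  + by apply: ov; polyK.
  + by apply: ov; polyK.
  + by apply: ov; polyK.
  + by rewrite /ev3 !(ev2C, ev2X, ev2M) /=; apply: nz3_1.
  move=> [[] [u v]] /=; rewrite /onC /=; first by move=> _ [].
  move=> /eqP hv _; rewrite /ev3 !(ev2C, ev2X, ev2M) horner_exp => nzQ.
  rewrite /phiA; case: ifP => [/eqP hu0 | /negbT hu0].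
    have v0 := onA u v hv hu0.
    by move: nzQ; rewrite /nz3 /= hu0 v0 expr2 mulr0 eqxx.
  by apply: (prop3I 1); rewrite /= ?mul1r ?oner_eq0.
have [t0 rt0] : exists t, root h t.
  by apply/closed_rootP; rewrite sh eqSS -lt0n ltnW.
have rt0' : h.[t0] == 0 := rt0.
have [t1 ht1] : exists t, h.[t] != 0.
  apply: NNPP => hn.
  have hz : h = 0.
    apply: poly_eq_nz => y _; rewrite horner0; apply/eqP.
    by apply/negPn/negP => hy; apply: hn; exists y.
  by rewrite hz eqxx in h0.
exists (false, (t0, 0)), (false, (t1, sqrtC H.[t1])); split.
- by rewrite /onC /= HG (eqP rt0') mul0r expr2 mulr0.
- by rewrite /onC /= sqrtCK.
rewrite /= /phiA rt0' (negbTE ht1) => [[c _ [E _ _]]].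
by move: ht1; rewrite E mulr0 eqxx.
Qed.
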